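(* Let $\mathbf{G}$ be a Markov equivalence class of DAGs over a finite set $\mathbf{V}$, $\mathcal{G}\in\mathbf{G}$, $\mathbf{Y}\subseteq\mathbf{V}$ and $\mathbf{Z}=\mathrm{can}_{\mathbf{G}}(\mathbf{Y})$. Then $\mathrm{an}_{\mathcal{G}}(\mathbf{Y})=\mathbf{Z}$ if and only if every edge of $\mathcal{G}$ between a node $Z\in\mathbf{Z}$ and a node $X\in\mathbf{V}\setminus\mathbf{Z}$ is directed out of $Z$ (i.e. $Z\to X$).
   Context: Two DAGs over $\mathbf{V}$ are Markov equivalent iff they have the same skeleton and the same unshielded colliders. $\mathrm{an}_{\mathcal{G}}(\mathbf{Y})$ is the set of nodes that either belong to $\mathbf{Y}$ or have a directed path in $\mathcal{G}$ to some node of $\mathbf{Y}$. $X$ is a compelled ancestor of $Y$ in $\mathbf{G}$ if $X\in\mathrm{an}_{\mathcal{G}}(Y)$ for every $\mathcal{G}\in\mathbf{G}$; $\mathrm{can}_{\mathbf{G}}(\mathbf{Y})$ is the union over $Y\in\mathbf{Y}$ of the sets of compelled ancestors of $Y$. *)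

(* Defs.v *)
(* A directed graph on a finite node set V is an edge relation
   g : rel V, with g x y meaning the edge x -> y. *)
From mathcomp Require Import all_boot.
Set Implicit Arguments. Unset Strict Implicit. Unset Printing Implicit Defensive.

Definition dag (V : finType) (g : rel V) : Prop :=
  (forall x, ~~ g x x) /\ (forall x y, g x y -> ~~ connect g y x).

Definition adj (V : finType) (g : rel V) (x y : V) : bool := g x y || g y x.

Definition unshielded_collider (V : finType) (g : rel V) (x z y : V) : bool :=
  [&& g x z, g y z, x != y & ~~ adj g x y].

Definition markov_equiv (V : finType) (g h : rel V) : Prop :=
  (forall x y, adj g x y = adj h x y) /\
  (forall x z y, unshielded_collider g x z y = unshielded_collider h x z y).

Definition mec (V : finType) (g0 : rel V) (g : rel V) : Prop :=
  dag g /\ markov_equiv g g0.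

Definition an (V : finType) (g : rel V) (Y : {set V}) (x : V) : Prop :=
  exists2 y, y \in Y & connect g x y.

Definition compelled_anc (V : finType) (C : rel V -> Prop) (x y : V) : Prop :=
  forall g, C g -> connect g x y.

Definition can (V : finType) (C : rel V -> Prop) (Y : {set V}) (x : V) : Prop :=
  exists2 y, y \in Y & compelled_anc C x y.

(* Main.v *)
Require Import Defs.
From mathcomp Require Import all_boot.
From Stdlib Require Import Classical.

Lemma path_closed (V : finType) (g : rel V) (P : V -> Prop) :
  (forall u v, g u v -> P v -> P u) -> forall x y, connect g x y -> P y -> P x.
Proof.
move=> H x y /connectP [p]; elim: p x => [|z p IH] x /=.
  by move=> _ ->.
case/andP=> gxz pz ly cy; apply: (H x z gxz); exact: IH.
Qed.

Theorem lemma5 (V : finType) (g : rel V) (Y : {set V}) :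
  dag g ->
  (forall x, an g Y x <-> can (mec g) Y x) <->
  (forall z x, can (mec g) Y z -> ~ can (mec g) Y x -> adj g z x -> g z x).
Proof.
move=> D.
have Mg : mec g g by split => //.
have canan : forall x, can (mec g) Y x -> an g Y x.
  by move=> x [y Hy Hc]; exists y => //; apply: Hc.
split.
  move=> H z x cz ncx; rewrite /adj; case/orP => // gxz.
  exfalso; apply: ncx; apply/H.
  case: (canan z cz) => y Hy Hc; exists y => //.
  by apply: connect_trans (connect1 gxz) Hc.
move=> H x; split => //; last exact: canan.
case=> y Hy Hc.
apply: (@path_closed V g (can (mec g) Y) _ x y Hc); last first.
  by exists y => // h _; exact: connect0.
move=> u v guv cv; apply: NNPP => ncu.
have gvu := H v u cv ncu (introT orP (or_intror guv)).
case: D => _ D; move: (D u v guv); rewrite connect1 //.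
Qed.
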